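(* Let $A$ be a stationary, co-stationary subset of $\omega_1$, let $T$ be the tree of all countable closed (compact in the order topology of $\omega_1$) subsets of $A$ ordered by $s\le t$ iff $s$ is an initial part of $t$, and let $P(T)$ be the set of all paths of $T$ (downward closed linearly ordered subsets of $T$), viewed as a subspace of $2^T$ via characteristic functions. Then $P(T)$ is a Corson compactum, and the square $P(T)\times P(T)$ is not $nwd$-separable (hence not $d$-separable).
   Context: A Corson compactum is a compact space embeddable in $\Sigma(\mathbb{R}^\kappa)=\{x\in\mathbb{R}^\kappa:|\{\alpha:x(\alpha)\neq0\}|\le\omega\}$ for some cardinal $\kappa$. A space is $d$-separable if it has a dense subset which is a countable union of discrete subspaces; it is $nwd$-separable if it has a dense subset which is a countable union of nowhere dense subsets. *)

(* Defs.v *)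
From HB Require Import structures.
From mathcomp Require Import all_boot all_order all_algebra.
From mathcomp Require Import all_classical all_reals all_analysis.
From mathcomp Require Import Rstruct Rstruct_topology.
From Stdlib Require Import Rdefinitions.
Set Implicit Arguments. Unset Strict Implicit. Unset Printing Implicit Defensive.
Import Order.TTheory GRing.Theory Num.Theory.
Local Open Scope classical_set_scope.
Local Open Scope order_scope.

(* W is (order-isomorphic to) omega_1: a well-ordered, uncountable totally
   ordered type all of whose proper initial segments are countable. *)
Definition is_omega1 (d : Order.disp_t) (W : orderType d) : Prop :=
  well_founded (fun x y : W => x < y) /\
  ~ countable [set: W] /\
  (forall a : W, countable [set x : W | x < a]).

(* open interval (lo, hi) of the order topology, None = unbounded end *)
Definition in_oint (d : Order.disp_t) (W : orderType d)
    (lo hi : option W) (x : W) : Prop :=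
  (match lo with None => True | Some l => l < x end) /\
  (match hi with None => True | Some h => x < h end).

Definition ord_closed (d : Order.disp_t) (W : orderType d) (s : set W) : Prop :=
  forall a : W, ~ s a -> exists lo hi : option W,
    in_oint lo hi a /\ forall x, in_oint lo hi x -> ~ s x.

Definition club (d : Order.disp_t) (W : orderType d) (C : set W) : Prop :=
  (forall a : W, exists2 b, C b & a <= b) /\ ord_closed C.

Definition stationary (d : Order.disp_t) (W : orderType d) (A : set W) : Prop :=
  forall C : set W, club C -> A `&` C !=set0.

Definition co_stationary (d : Order.disp_t) (W : orderType d) (A : set W) : Prop :=
  stationary (~` A).

Definition node (d : Order.disp_t) (W : orderType d) (A : set W) :=
  {s : set W | s `<=` A /\ countable s /\ ord_closed s}.

Definition tree_le (d : Order.disp_t) (W : orderType d) (A : set W)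
    (s t : node A) : Prop :=
  proj1_sig s `<=` proj1_sig t /\
  forall x y, proj1_sig s x -> proj1_sig t y -> y <= x -> proj1_sig s y.

Definition is_path (d : Order.disp_t) (W : orderType d) (A : set W)
    (p : set (node A)) : Prop :=
  (forall s t, p t -> tree_le s t -> p s) /\
  (forall s t, p s -> p t -> tree_le s t \/ tree_le t s).

Definition charf (d : Order.disp_t) (W : orderType d) (A : set W)
    (p : set (node A)) : {ptws node A -> bool} :=
  fun t => `[< p t >].

Definition paths_space (d : Order.disp_t) (W : orderType d) (A : set W)
    : set {ptws node A -> bool} :=
  [set f | exists2 p, is_path p & f = charf p].

Definition Sigma_prod (I : Type) : set {ptws I -> R} :=
  [set x | countable [set i | x i <> 0%R]].

(* X (with the subspace topology) is a Corson compactum: compact and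
   homeomorphic to a subspace of Sigma(R^I) for some index set I *)
Definition corson_compact (S : topologicalType) (X : set S) : Prop :=
  compact X /\
  exists (I : Type) (f : S -> {ptws I -> R}),
    {in X &, injective f} /\
    f @` X `<=` @Sigma_prod I /\
    {within X, continuous f} /\
    exists g : {ptws I -> R} -> S,
      {within f @` X, continuous g} /\ (forall x, X x -> g (f x) = x).

Definition dense_in (S : topologicalType) (X D : set S) : Prop :=
  D `<=` X /\ X `<=` closure D.

(* N is nowhere dense in the subspace X: the interior (relative to X) of the
   closure (relative to X) of N is empty *)
Definition nowhere_dense_in (S : topologicalType) (X N : set S) : Prop :=
  N `<=` X /\
  forall U : set S, open U -> U `&` X `<=` closure N -> U `&` X = set0.

Definition discrete_subspace (S : topologicalType) (D : set S) : Prop :=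
  forall x, D x -> exists U : set S, open U /\ U x /\ U `&` D = [set x].

Definition nwd_separable (S : topologicalType) (X : set S) : Prop :=
  exists N : nat -> set S,
    (forall n, nowhere_dense_in X (N n)) /\ dense_in X (\bigcup_n N n).

Definition d_separable (S : topologicalType) (X : set S) : Prop :=
  exists D : nat -> set S,
    (forall n, D n `<=` X /\ discrete_subspace (D n)) /\ dense_in X (\bigcup_n D n).

Arguments paths_space {d W} A.
Arguments charf {d W A} p.

(* Main.v *)
Require Import Defs.
From HB Require Import structures.
From mathcomp Require Import all_boot all_order all_algebra.
From mathcomp Require Import all_classical all_reals all_analysis.
From mathcomp Require Import Rstruct Rstruct_topology lra.
Set Implicit Arguments. Unset Strict Implicit. Unset Printing Implicit Defensive.
Import Order.TTheory GRing.Theory Num.Theory.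
Local Open Scope classical_set_scope.
Section Count.
Lemma cU T (A B : set T) : countable A -> countable B -> countable (A `|` B).
Proof.
move=> cA cB.
have -> : A `|` B = \bigcup_(b in [set: bool]) (if b then A else B).
  apply/seteqP; split => x.
    by case=> h; [exists true|exists false].
  by case=> -[] _ h; [left|right].
apply: bigcup_countable => //; by case.

Qed.
Lemma csub T (A B : set T) : B `<=` A -> countable A -> countable B.
Proof. by move=> h; apply: sub_countable; apply: subset_card_le. Qed.
Lemma cimg T U (f : T -> U) (A : set T) : countable A -> countable (f @` A).
Proof. by move=> h; apply: sub_countable h; apply: card_image_le. Qed.
Lemma enum_ctbl T (A : set T) : countable A -> A !=set0 ->
  exists e : nat -> T, (forall n, A (e n)) /\ forall x, A x -> exists n, e n = x.
Proof.
move=> /pfcard_geP[->|]; first by case=> x [].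
move=> /surjfunPex[f hf] _; exists f; split.
  by move=> n; rewrite hf; exists n.
by move=> x; rewrite hf => -[n _ <-]; exists n.
Qed.
End Count.

Section Ord.
Local Open Scope order_scope.
Variables (d : Order.disp_t) (W : orderType d).
Hypothesis hW : is_omega1 W.

Lemma least (P : W -> Prop) : (exists x, P x) -> exists m, P m /\ forall y, P y -> m <= y.
Proof.
case: hW => wf _ [x Px].
elim/(well_founded_ind wf): x Px => x IH Px.
have [[y [Py ylt]]|] := pselect (exists y, P y /\ y < x); first exact: IH Py.
move=> h; exists x; split => // y Py; rewrite leNgt; apply/negP => yx.
by apply: h; exists y.
Qed.

Lemma ctbl_bound (S : set W) : countable S -> exists b, forall x, S x -> x < b.
Proof.
move=> cS; case: hW => _ [nc cs].
pose U := \bigcup_(x in S) [set y | y <= x].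
have cU' : countable U.
  apply: bigcup_countable => // x _.
  apply: (@csub _ ([set y | y < x] `|` [set x])); last by apply: cU.
  by move=> y /=; rewrite le_eqVlt => /orP[/eqP->|]; [right|left].
have [b Ub] : exists b, ~ U b.
  apply: contra_notP nc => h; apply: csub cU' => y _.
  by apply: contra_notP h => nU; exists y.
exists b => x Sx; rewrite ltNge; apply/negP => bx; apply: Ub; by exists x.
Qed.

Lemma succ_ex (b : W) : exists c, b < c /\ forall y, b < y -> c <= y.
Proof.
have [c hc] := ctbl_bound (countable1 b).
have [m [bm hm]] := @least (fun y => b < y) (ex_intro _ c (hc b erefl)).
by exists m.
Qed.
End Ord.
Section Tree.
Local Open Scope order_scope.
Variables (d : Order.disp_t) (W : orderType d) (A : set W).
Hypothesis hW : is_omega1 W.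
Hypothesis hS : stationary A.

Local Notation sv := (@proj1_sig _ _).

Lemma node_ext (s t : node A) : sv s = sv t -> s = t.
Proof.
case: s => s hs; case: t => t ht /= e; subst t; congr exist; exact: Prop_irrelevance.
Qed.

Lemma tle_refl (s : node A) : tree_le s s.
Proof. by split. Qed.

Lemma tle_trans (s t u : node A) : tree_le s t -> tree_le t u -> tree_le s u.
Proof.
move=> [st hst] [tu htu]; split => [x /st /tu //|x y sx uy yx].
apply: (hst _ _ sx _ yx); apply: (htu _ _ (st _ sx) uy yx).
Qed.

Lemma node_ctbl (s : node A) : countable (sv s).
Proof. by case: s => s [? []]. Qed.
Lemma node_subA (s : node A) : sv s `<=` A.
Proof. by case: s => s []. Qed.
Lemma node_closed (s : node A) : ord_closed (sv s).
Proof. by case: s => s [? []]. Qed.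

Lemma node_bound (s : node A) : exists b, forall x, sv s x -> x < b.
Proof. exact: ctbl_bound (node_ctbl s). Qed.

Lemma A_unbounded (b : W) : exists a, A a /\ b < a.
Proof.
have [c [bc hc]] := succ_ex hW b.
have : club [set x | b < x].
  split.
    move=> a; have [e he] := ctbl_bound hW (cU (countable1 a) (countable1 b)).
    by exists e; [apply: he; right | apply/ltW/he; left].
  move=> x /= nbx; exists None, (Some c); split.
    by split => //=; move/negP: nbx; rewrite -leNgt => xb; exact: le_lt_trans xb bc.
  move=> y [_ /= yc] by'; move: (hc _ by'); rewrite leNgt yc.
  by [].
move=> /hS [a [Aa ba]]; by exists a.
Qed.

Lemma shrink (lo hi : option W) (b e : W) : in_oint lo hi b -> b < e ->
  exists hi', in_oint lo hi' b /\ forall x, in_oint lo hi' x -> in_oint lo hi x /\ x < e.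
Proof.
case: hi => [h|] [hl hh] be.
  exists (Some (Order.min h e)); split; first by split => //=; rewrite lt_min hh be.
  by move=> x [xl /=]; rewrite lt_min => /andP[xh xe].
exists (Some e); split => // x [xl /= xe]; by split.
Qed.

Definition addpt_set (m : node A) (a : W) := sv m `|` [set a].

Lemma addpt_prop (m : node A) (a : W) : A a -> (forall x, sv m x -> x < a) ->
  addpt_set m a `<=` A /\ countable (addpt_set m a) /\ ord_closed (addpt_set m a).
Proof.
move=> Aa ha; split; first by move=> x [/node_subA|->].
split; first exact: cU (node_ctbl m) (countable1 a).
move=> b nb.
have bnm : ~ sv m b by move=> h; apply: nb; left.
have bna : b <> a by move=> h; apply: nb; right.
case: (ltgtP a b) => [ab|ba|ab]; last by case: bna.
  exists (Some a), None; split => // x [/= ax _] [/ha|xa].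
    by rewrite ltNge (ltW ax).
  by move: ax; rewrite xa ltxx.
have [lo [hi [bi hi']]] := node_closed bnm.
have [hi2 [bi2 h2]] := shrink bi ba.
exists lo, hi2; split => // x /h2 [xi xa] [/hi'//|xa'].
by move: xa; rewrite xa' ltxx.
Qed.

Definition addpt (m : node A) (a : W) (Aa : A a) (ha : forall x, sv m x -> x < a)
  : node A := exist _ (addpt_set m a) (addpt_prop Aa ha).

Lemma addpt_le (m : node A) (a : W) (Aa : A a) (ha : forall x, sv m x -> x < a) :
  tree_le m (addpt Aa ha).
Proof.
split => [x mx|x y mx [my|->] yx]; first by left.
  by [].
by move: (ha _ mx); rewrite ltNge yx.
Qed.

Lemma push (s : node A) (b : W) :
  exists s' : node A, tree_le s s' /\ exists2 x, sv s' x & b < x.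
Proof.
have [c hc] := node_bound s.
have [e he] := ctbl_bound hW (cU (countable1 c) (countable1 b)).
have [a [Aa ea]] := A_unbounded e.
have ha : forall x, sv s x -> x < a.
  by move=> x /hc xc; apply: (lt_trans xc); apply: (lt_trans _ ea); apply: he; left.
exists (addpt Aa ha); split; first exact: addpt_le.
exists a; first by right.
by apply: (lt_trans _ ea); apply: he; right.
Qed.

Lemma init_comparable (t t' s : node A) :
  tree_le t s -> tree_le t' s -> tree_le t t' \/ tree_le t' t.
Proof.
move=> [ts ht] [t's ht'].
have [sub|nsub] := pselect (sv t `<=` sv t').
  left; split => // x y tx t'y yx; exact: ht tx (t's _ t'y) yx.
right; move: nsub => /existsNP[x /not_implyP[tx nt'x]].
have t'sub : sv t' `<=` sv t.
  move=> y t'y; case: (leP y x) => [yx|xy].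
    exact: ht tx (t's _ t'y) yx.
  by case: nt'x; apply: ht' t'y (ts _ tx) (ltW xy).
split => // y z t'y tz zy; exact: ht' t'y (ts _ tz) zy.
Qed.

Definition down (s : node A) : set (node A) := [set t | tree_le t s].

Lemma down_path (s : node A) : is_path (down s).
Proof.
split; first by move=> u t /= ts ut; exact: tle_trans ut ts.
move=> u t /= us ts; exact: init_comparable us ts.
Qed.

End Tree.
Section Fusion.
Local Open Scope order_scope.
Variables (d : Order.disp_t) (W : orderType d) (A : set W).
Hypothesis hW : is_omega1 W.
Hypothesis hS : stationary A.

Local Notation sv := (@proj1_sig _ _).

Lemma limit_node (s : nat -> node A) (dl : W) :
  A dl ->
  (forall j k, (j <= k)%N -> tree_le (s j) (s k)) ->
  (forall k x, sv (s k) x -> x < dl) ->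
  (forall x, x < dl -> exists k y, sv (s k) y /\ x < y) ->
  exists L : node A, forall k, tree_le (s k) L.
Proof.
move=> Adl mono bnd cof.
pose L := (\bigcup_(k in [set: nat]) sv (s k)) `|` [set dl].
have LA : L `<=` A by move=> x [[k _ /node_subA]|->].
have Lc : countable L.
  apply: cU (countable1 _); apply: bigcup_countable => // k _; exact: node_ctbl.
have Lcl : ord_closed L.
  move=> b nb.
  have bnd' : forall k, ~ sv (s k) b by move=> k h; apply: nb; left; exists k.
  have bnd2 : b <> dl by move=> h; apply: nb; right.
  case: (ltgtP dl b) => [db|bd|db]; last by case: bnd2.
    exists (Some dl), None; split => // x [/= dx _] [[k _ /bnd xd]|xd].
      by move: (lt_trans dx xd); rewrite ltxx.
    by move: dx; rewrite xd ltxx.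
  have [k [y [sky by']]] := cof _ bd.
  have [lo [hi [bi hi']]] := node_closed (bnd' k).
  have [hi2 [bi2 h2]] := shrink bi by'.
  exists lo, hi2; split => // x /h2 [xi xy] [[j _ sjx]|xd].
    have [jk|kj] := leqP j k.
      by apply: (hi' _ xi); case: (mono _ _ jk) => + _; apply.
    case: (mono _ _ (ltnW kj)) => _ hh.
    by apply: (hi' _ xi); apply: (hh _ _ sky sjx (ltW xy)).
  by move: (lt_trans xy (bnd _ _ sky)); rewrite xd ltxx.
exists (exist _ L (conj LA (conj Lc Lcl))) => k; split => /=.
  by move=> x skx; left; exists k.
move=> x y skx [[j _ sjy]|->] yx.
  have [jk|kj] := leqP j k.
    by case: (mono _ _ jk) => + _; apply.
  by case: (mono _ _ (ltnW kj)) => _ hh; apply: (hh _ _ skx sjy yx).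
by move: (le_lt_trans yx (bnd _ _ skx)); rewrite ltxx.
Qed.

Lemma club_closure (h : W -> W) (w0 : W) : (forall g, g < h g) ->
  club [set dl | w0 < dl /\ forall g, g < dl -> h g < dl].
Proof.
move=> hg; split.
  move=> a.
  have /choice [H hH] : forall c, exists e, forall g, g <= c -> h g < e.
    move=> c; have : countable (h @` [set g | g <= c]).
      apply: cimg; apply: (@csub _ ([set g | g < c] `|` [set c])).
        by move=> g /=; rewrite le_eqVlt => /orP[/eqP->|]; [right|left].
      apply: cU => //; by case: hW => _ [_ ->].
    move=> cnt; have [e he] := ctbl_bound hW cnt; exists e => g gc; apply: he; by exists g.
  have [c0 hc0] := ctbl_bound hW (cU (countable1 a) (countable1 w0)).
  pose c := fix c k := if k is k'.+1 then H (c k') else c0.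
  have cS k : c k.+1 = H (c k) by [].
  have [ub hub] := ctbl_bound hW (cimg c (@countableP nat [set: nat])).
  have [dl [dlub dlmin]] := @least _ _ hW (fun b => forall k, c k <= b)
     (ex_intro _ ub (fun k => ltW (hub _ (ex_intro2 _ _ k I erefl)))).
  exists dl; last first.
    by apply: le_trans (dlub 0%N); apply: ltW; apply: hc0; left.
  split; first by apply: lt_le_trans (dlub 0%N); apply: hc0; right.
  move=> g gdl.
  have [k gk] : exists k, g < c k.
    apply: contrapT => nk.
    have : dl <= g.
      apply: dlmin => k; rewrite leNgt; apply/negP => gk; apply: nk; by exists k.
    by rewrite leNgt gdl.
  apply: lt_le_trans (dlub k.+1); rewrite cS; apply: hH; exact: ltW.
move=> a na.
have [[w0a hall]|] := pselect (w0 < a /\ forall g, g < a -> h g < a).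
  by case: na; split.
move=> /not_andP[nw|/existsNP[g /not_implyP[ga nh]]].
  have [c [wc hc]] := succ_ex hW w0.
  exists None, (Some c); split.
    split => //=; move/negP: nw; rewrite -leNgt => aw; exact: le_lt_trans aw wc.
  move=> x [_ /= xc] [wx _]; move: (hc _ wx); by rewrite leNgt xc.
have [c [hc hcm]] := succ_ex hW (h g).
exists (Some g), (Some c); split.
  split => //=; move/negP: nh; rewrite -leNgt => ah; exact: le_lt_trans ah hc.
move=> x [/= gx xc] [_ hx]; move: (hcm _ (hx _ gx)); by rewrite leNgt xc.
Qed.

End Fusion.
Section FusionMain.
Local Open Scope order_scope.
Variables (d : Order.disp_t) (W : orderType d) (A : set W).
Hypothesis hW : is_omega1 W.
Hypothesis hS : stationary A.

Local Notation sv := (@proj1_sig _ _).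
Local Notation P := (node A * node A)%type.
Definition ext (u v : P) := tree_le u.1 v.1 /\ tree_le u.2 v.2.
Definition Ords (u : P) : set W := sv u.1 `|` sv u.2.

Lemma ext_refl u : ext u u. Proof. split; exact: tle_refl. Qed.
Lemma ext_trans u v w : ext u v -> ext v w -> ext u w.
Proof. by move=> [? ?] [? ?]; split; apply: tle_trans; eassumption. Qed.
Lemma Ords_ctbl u : countable (Ords u).
Proof. apply: cU; exact: node_ctbl. Qed.

Lemma fusion (D : nat -> P -> Prop) :
  (forall n u v, ext u v -> D n u -> D n v) ->
  (forall n u, exists v, ext u v /\ D n v) ->
  forall u0, exists v, ext u0 v /\ forall n, D n v.
Proof.
move=> Dup Dd u0.
have /choice [G0 hG0] : forall t : nat * P * W, exists v, ext t.1.2 v /\ D t.1.1 v /\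
    (exists2 x, sv v.1 x & t.2 < x) /\ (exists2 x, sv v.2 x & t.2 < x).
  move=> [[n u] b] /=; have [v [uv Dv]] := Dd n u.
  have [s1 [h1 e1]] := push hW hS v.1 b.
  have [s2 [h2 e2]] := push hW hS v.2 b.
  exists (s1, s2); split; first by apply: ext_trans uv _; split.
  split; last by split.
  by apply: Dup Dv; split.
pose G n u b := G0 (n, u, b).
have hG n u b : ext u (G n u b) /\ D n (G n u b) /\
    (exists2 x, sv (G n u b).1 x & b < x) /\ (exists2 x, sv (G n u b).2 x & b < x).
  exact: (hG0 (n, u, b)).
pose R := fix R k (g : W) : set P := if k is k'.+1 then
    (fun t : nat * P * W => G t.1.1 t.1.2 t.2) @`
      (([set: nat] `*` R k' g) `*` [set b | b < g])
  else [set u0].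
have Rc k g : countable (R k g).
  elim: k => [|k IH] /=; first exact: countable1.
  apply: cimg; apply: countableX; last by case: hW => _ [_ ->].
  apply: countableX => //; exact: countableP.
have Rmono k g g' : g <= g' -> R k g `<=` R k g'.
  move=> gg'; elim: k => [|k IH] //= v [[[n u] b] [[_ /= Ru] /= bg] <-].
  exists (n, u, b) => //; split; [split => //; exact: IH|exact: lt_le_trans bg gg'].
pose O g := \bigcup_(k in [set: nat]) \bigcup_(u in R k g) Ords u.
have Oc g : countable (O g).
  apply: bigcup_countable => // k _; apply: bigcup_countable => // u _.
  exact: Ords_ctbl.
have /choice [h hh] : forall g, exists b, (forall x, O g x -> x < b) /\ g < b.
  move=> g; have [b hb] := ctbl_bound hW (cU (Oc g) (countable1 g)).
  by exists b; split => [x Ox|]; apply: hb; [left|right].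
have [w0 _] : exists w0 : W, True.
  case: hW => _ [nc _]; apply: contra_notP nc => nw.
  by apply: csub (countable0 W) => x _; apply: nw; exists x.
have [dl [Adl [w0dl cl]]] := hS (club_closure hW w0 (fun g => (hh g).2)).
have [e [edl esurj]] : exists e : nat -> W, (forall n, e n < dl) /\
    forall x, x < dl -> exists n, e n = x.
  have := @enum_ctbl _ [set x | x < dl] _ (ex_intro _ w0 w0dl).
  by case: hW => _ [_ ->] => /(_ isT)[e [he1 he2]]; exists e.
pose u := fix u k := if k is k'.+1 then G k' (u k') (e k') else u0.
have uS k : u k.+1 = G k (u k) (e k) by [].
have uR k : exists2 g, g < dl & R k g (u k).
  elim: k => [|k [g gdl Ruk]]; first by exists w0.
  pose m := Order.max g (e k).
  have mdl : m < dl by rewrite /m gt_max gdl edl.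
  exists (h m); first exact: cl.
  rewrite uS /=; exists (k, u k, e k) => //; split.
    split => //; apply: Rmono Ruk; apply: le_trans (ltW (hh m).2).
    by rewrite /m le_max lexx.
  by apply: le_lt_trans (hh m).2; rewrite /m le_max lexx orbT.
have ubnd k x : Ords (u k) x -> x < dl.
  have [g gdl Ruk] := uR k => Ox.
  apply: lt_trans (cl _ gdl); apply: (hh g).1.
  by exists k => //; exists (u k).
have umono j k : (j <= k)%N -> ext (u j) (u k).
  move=> jk; rewrite -(subnKC jk); elim: (k - j)%N => [|n IH].
    by rewrite addn0; exact: ext_refl.
  by rewrite addnS uS; apply: (ext_trans IH); case: (hG (j + n)%N (u (j + n)%N) (e (j + n)%N)).
have [L1 hL1] := @limit_node _ _ A (fun k => (u k).1) dl Adl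
  (fun j k jk => (umono j k jk).1) (fun k x h => ubnd k x (or_introl h))
  (fun x xd => let: ex_intro n en := esurj x xd in
     ex_intro _ n.+1 (let: ex_intro2 y hy xy := (hG n (u n) (e n)).2.2.1 in
       ex_intro _ y (conj hy (eq_ind _ (fun z => z < y) xy _ en)))).
have [L2 hL2] := @limit_node _ _ A (fun k => (u k).2) dl Adl
  (fun j k jk => (umono j k jk).2) (fun k x h => ubnd k x (or_intror h))
  (fun x xd => let: ex_intro n en := esurj x xd in
     ex_intro _ n.+1 (let: ex_intro2 y hy xy := (hG n (u n) (e n)).2.2.2 in
       ex_intro _ y (conj hy (eq_ind _ (fun z => z < y) xy _ en)))).
exists (L1, L2); split; first exact: (conj (hL1 0%N) (hL2 0%N)).
move=> n; apply: (Dup n (u n.+1)); first exact: (conj (hL1 n.+1) (hL2 n.+1)).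
by rewrite uS; case: (hG n (u n) (e n)) => _ [].
Qed.
End FusionMain.
Section Corson.
Variables (d : Order.disp_t) (W : orderType d) (A : set W).
Hypothesis hW : is_omega1 W.
Hypothesis hS : stationary A.
Hypothesis hC : co_stationary A.
Local Notation sv := (@proj1_sig _ _).

Lemma path_ctbl (p : set (node A)) : is_path p -> countable p.
Proof.
move=> [pdown plin].
pose U := \bigcup_(s in p) sv s.
have [[b hb]|nb] := pselect (exists b, forall x, U x -> (x < b)%O).
  pose phi (s : node A) : option W :=
    if pselect (exists x, U x /\ ~ sv s x) is left h then
      Some (xget b [set m | (U m /\ ~ sv s m) /\ forall y, U y /\ ~ sv s y -> (m <= y)%O])
    else None.
  have phiE s : p s -> sv s = [set x | U x /\ (phi s = None \/ exists2 m, phi s = Some m & (x < m)%O)].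
    move=> ps; rewrite /phi; case: pselect => [[x0 hx0]|nx].
      have [m hm] : exists m, (U m /\ ~ sv s m) /\ forall y, U y /\ ~ sv s y -> (m <= y)%O.
        have [m [hm1 hm2]] := @least _ _ hW (fun y => U y /\ ~ sv s y) (ex_intro _ x0 hx0); by exists m.
      case: xgetP => [m' _ [[Um' nsm'] minm']|/(_ m)//].
      apply/seteqP; split => x.
        move=> sx; split; first by exists s.
        right; exists m' => //; rewrite ltNge; apply/negP => m'x.
        case: Um' => t pt tm'; case: (plin _ _ ps pt) => [[_ hst]|[ts _]].
          by apply: nsm'; apply: (hst _ _ sx tm' m'x).
        by apply: nsm'; apply: ts.
      move=> [Ux [//|[m'' [<-] xm]]]; apply: contrapT => nsx.
      by move: (minm' _ (conj Ux nsx)); rewrite leNgt xm.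
    apply/seteqP; split => x; first by move=> sx; split; [exists s|left].
    move=> [Ux _]; apply: contrapT => nsx; apply: nx; by exists x.
  have inj : {in p &, injective phi}.
    move=> s t /set_mem ps /set_mem pt e; apply: node_ext.
    by rewrite (phiE s ps) (phiE t pt) e.
  rewrite -(eq_countable (inj_card_eq inj)).
  apply: (@csub _ ([set None] `|` Some @` [set x | (x < b)%O])).
    move=> _ [s ps <-]; rewrite /phi; case: pselect => [[x0 hx0]|_]; last by left.
    right; exists (xget b [set m | (U m /\ ~ sv s m) /\ forall y, U y /\ ~ sv s y -> (m <= y)%O]) => //.
    case: xgetP => [m _ [[Um _] _]|hn]; first exact: hb.
    have [m [hm1 hm2]] := @least _ _ hW (fun y => U y /\ ~ sv s y) (ex_intro _ x0 hx0).
    by case: (hn m).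
  apply: cU => //; apply: cimg; by case: hW => _ [_ ->].
exfalso.
have Uclub : club U.
  split.
    move=> a; apply: contrapT => h; apply: nb; exists a => x Ux.
    rewrite ltNge; apply/negP => ax; apply: h; by exists x.
  move=> a nUa.
  have [b ab] : exists b, (a < b)%O /\ U b.
    have [c hc] := ctbl_bound hW (countable1 a).
    apply: contrapT => h; apply: nb; exists c => x Ux.
    rewrite ltNge; apply/negP => cx; apply: h; exists x; split => //.
    exact: lt_le_trans (hc a erefl) cx.
  case: ab => ab [t pt tb].
  have nta : ~ sv t a by move=> h; apply: nUa; exists t.
  have [lo [hi [ai hi']]] := node_closed nta.
  have [hi2 [ai2 h2]] := shrink ai ab.
  exists lo, hi2; split => // x /h2 [xi xb] [t' pt' t'x].
  case: (plin _ _ pt pt') => [[_ h]|[h _]].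
    exact: (hi' _ xi) (h _ _ tb t'x (ltW xb)).
  exact: (hi' _ xi) (h _ t'x).
have [x [nAx Ux]] := hC Uclub.
by apply: nAx; case: Ux => s _ /node_subA.
Qed.
End Corson.
Section Top.
Variables (d : Order.disp_t) (W : orderType d) (A : set W).
Hypothesis hW : is_omega1 W.
Hypothesis hS : stationary A.
Hypothesis hC : co_stationary A.
HB.instance Definition _ := gen_eqMixin (node A).
Local Notation X := (paths_space A).
Local Notation F := {ptws node A -> bool}.

Lemma ptws_cvg (Y : Type) (T : topologicalType) (G : set_system Y)
  (g : Y -> {ptws node A -> T}) (g0 : {ptws node A -> T}) :
  Filter G -> (forall i, (fun x => g x i) @ G --> g0 i) -> g @ G --> g0.
Proof.
move=> FF h.
apply/cvg_sup => i U [/= _ [[V oV <-] Vg]] /filterS; apply.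
apply: (h i); exact: open_nbhs_nbhs.
Qed.

Lemma charfE (p : set (node A)) t : charf p t <-> p t.
Proof. rewrite /charf; split => /asboolP //. Qed.

Definition PF (f : F) := (forall s t, f t -> tree_le s t -> f s) /\
  (forall s t, f s -> f t -> tree_le s t \/ tree_le t s).

Lemma XE f : X f <-> PF f.
Proof.
split.
  move=> [p [pd pl] ->]; split.
    move=> s t /charfE pt st; apply/charfE; exact: pd pt st.
  move=> s t /charfE ps /charfE pt; exact: pl.
move=> [h1 h2]; exists [set t | f t].
  split; [move=> s t; exact: h1|move=> s t; exact: h2].
apply: funext => t; rewrite /charf; by rewrite asboolb.
Qed.

Lemma nbhs_coord (f : F) t : nbhs f [set g : F | g t = f t].
Proof.
have := @proj_continuous (node A) (fun _ => bool) t f.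
move=> /(_ [set f t]) h; apply: h.
by move=> y ->.
Qed.

Lemma X_closed : closed X.
Proof.
move=> f clf; apply/XE; split.
  move=> s t ft st.
  have [g [Xg [gs gt]]] := clf _ (filterI (nbhs_coord f s) (nbhs_coord f t)).
  have /XE [g1 _] := Xg; rewrite -gs; apply: g1 st; by rewrite gt.
move=> s t fs ft.
have [g [Xg [gs gt]]] := clf _ (filterI (nbhs_coord f s) (nbhs_coord f t)).
have /XE [_ g2] := Xg; apply: g2; by rewrite ?gs ?gt.
Qed.

Lemma X_compact : compact X.
Proof.
apply: (subclosed_compact X_closed (@tychonoff (node A) (fun _ => bool) (fun _ => setT) (fun _ => bool_compact))).
by [].
Qed.


Local Notation RR := Rdefinitions.R.
Local Open Scope ring_scope.
Definition emb (f : F) : {ptws node A -> RR} := fun t => if f t then 1 else 0.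
Definition gi (y : {ptws node A -> RR}) : F := fun t => (2^-1 < y t).

Lemma emb_cont : continuous emb.
Proof.
move=> f; apply: ptws_cvg => t U /nbhs_singleton Uf.
apply: filterS (nbhs_coord f t) => g /= gt; by rewrite /emb gt.
Qed.

Lemma half_lt1 : (2^-1 : RR) < 1. Proof. lra. Qed.
Lemma half_gt0 : (0 : RR) < 2^-1. Proof. lra. Qed.

Lemma gi_cont f : {for emb f, continuous gi}.
Proof.
apply: ptws_cvg => t U /nbhs_singleton Uf.
have : nbhs (emb f) [set z : {ptws node A -> RR} | gi z t = gi (emb f) t].
  have hp := @proj_continuous (node A) (fun _ => RR) t (emb f).
  have hyt : emb f t = (if f t then 1 else 0) by [].
  case E: (f t) in hyt.
    have n1 : nbhs (proj t (emb f)) [set r : RR | 2^-1 < r].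
      apply: open_nbhs_nbhs; split; first exact: open_gt.
      by rewrite /proj /= hyt half_lt1.
    have h2 : nbhs (emb f) [set z : {ptws node A -> RR} | 2^-1 < z t] := hp _ n1.
    apply: filterS h2 => z /= zt.
    by rewrite /gi zt hyt half_lt1.
  have n1 : nbhs (proj t (emb f)) [set r : RR | r < 2^-1].
    apply: open_nbhs_nbhs; split; first exact: open_lt.
    by rewrite /proj /= hyt half_gt0.
  have h2 : nbhs (emb f) [set z : {ptws node A -> RR} | z t < 2^-1] := hp _ n1.
  apply: filterS h2 => z /= zt.
  by rewrite /gi hyt ltNge (ltW zt) ltNge (ltW half_gt0).
by apply: filterS => z /= ->.
Qed.

Lemma gi_emb f : gi (emb f) = f.
Proof.
apply: funext => t; rewrite /gi /emb; case: (f t); first by rewrite half_lt1.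
by rewrite ltNge (ltW half_gt0).
Qed.

Lemma corson : corson_compact X.
Proof.
split; first exact: X_compact.
exists (node A), emb; split.
  move=> f g _ _ e; by rewrite -(gi_emb f) -(gi_emb g) e.
split.
  move=> _ [f [p pp ->] <-]; rewrite /Sigma_prod /=.
  apply: (@csub _ p); last exact: path_ctbl.
  move=> t /=; rewrite /emb; case: ifP => [/charfE //|_].
  by case.
split; first exact: continuous_subspaceT emb_cont.
exists gi; split; last by move=> f _; exact: gi_emb.
apply: continuous_in_subspaceT => y /set_mem [f _ <-].
exact: gi_cont.
Qed.

Local Close Scope ring_scope.
Local Open Scope order_scope.
Local Notation sv := (@proj1_sig _ _).

Lemma chain_max (p : set (node A)) (L : seq (node A)) (s0 : node A) :
  is_path p -> p s0 -> exists m, p m /\ tree_le s0 m /\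
    forall u, List.In u L -> p u -> tree_le u m.
Proof.
move=> [pd pl] ps0; elim: L => [|u L [m [pm [s0m hm]]]].
  by exists s0; split => //; split => //; exact: tle_refl.
have [pu|npu] := pselect (p u); last first.
  exists m; split => //; split => // v [<-//|]; exact: hm.
case: (pl _ _ pu pm) => [um|mu].
  exists m; split => //; split => // v [<-//|]; exact: hm.
exists u; split => //; split; first exact: tle_trans s0m mu.
move=> v [<-|vL pv]; first by move=> _; exact: tle_refl.
exact: tle_trans (hm _ vL pv) mu.
Qed.

Lemma list_bound (L : seq (node A)) (m : node A) :
  exists b, (forall x, sv m x -> x < b) /\ forall u, List.In u L -> forall x, sv u x -> x < b.
Proof.
elim: L => [|u L [b [hbm hb]]]; first by have [b hb] := node_bound hW m; exists b.
have [c hc] := node_bound hW u.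
have [e he] := ctbl_bound hW (cU (countable1 b) (countable1 c)).
have be : b < e by apply: he; left.
have ce : c < e by apply: he; right.
exists e; split; first by move=> x /hbm xb; exact: lt_trans xb be.
move=> v [<- x /hc xc|vL x /(hb _ vL) xb]; [exact: lt_trans xc ce|exact: lt_trans xb be].
Qed.

Lemma agree (p : set (node A)) (L : seq (node A)) (s0 : node A) (b0 : W) :
  is_path p -> p s0 -> exists s, tree_le s0 s /\ (exists2 x, sv s x & b0 < x) /\
    forall p', is_path p' -> p' s -> forall u, List.In u L -> (p' u <-> p u).
Proof.
move=> hp ps0; have [m [pm [s0m hm]]] := chain_max L hp ps0.
have [b [hbm hb]] := list_bound L m.
have [e he] := ctbl_bound hW (cU (countable1 b) (countable1 b0)).
have [a [Aa ea]] := A_unbounded hW hS e.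
have ba : b < a by apply: lt_trans ea; apply: he; left.
have ha : forall x, sv m x -> x < a by move=> x /hbm xb; exact: lt_trans xb ba.
exists (addpt Aa ha); split; first exact: tle_trans s0m (addpt_le Aa ha).
split; first by exists a; [right|apply: lt_trans ea; apply: he; right].
move=> p' [pd' pl'] p's u uL; split => [p'u|pu]; last first.
  apply: pd' p's _; exact: tle_trans (hm _ uL pu) (addpt_le Aa ha).
apply: contrapT => npu.
have nua : ~ sv u a by move=> h; move: (hb _ uL _ h); rewrite ltNge (ltW ba).
case: (pl' _ _ p'u p's) => [[us hus]|[su _]].
  apply: npu; case: hp => pd _; apply: pd pm _; split.
    by move=> x ux; case: (us _ ux) => // xa; case: nua; rewrite -xa.
  move=> x y ux my yx; exact: hus ux (or_introl my) yx.
by apply: nua; apply: su; right.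
Qed.

Lemma basic (f : F) (Pn : set F) (s0 : node A) (b0 : W) : X f -> f s0 -> nbhs f Pn ->
  exists s, tree_le s0 s /\ (exists2 x, sv s x & b0 < x) /\ forall g, X g -> g s -> Pn g.
Proof.
move=> [p hp fE] fs0 nP.
have ps0 : p s0 by apply/charfE; rewrite -fE.
apply: contrapT => nex.
have bad : forall L : seq (node A), exists g, X g /\ ~ Pn g /\ forall u, List.In u L -> g u = f u.
  move=> L; have [s [s0s [bs hs]]] := agree L b0 hp ps0.
  apply: contrapT => nL; apply: nex; exists s; split => //; split => // g Xg gs.
  apply: contrapT => nPg; apply: nL; exists g; split => //; split => // u uL.
  case: Xg => p' hp' gE; rewrite gE fE /charf.
  have p's : p' s by apply/charfE; rewrite -gE.
  by rewrite (propext (hs _ hp' p's _ uL)).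
pose B (L : seq (node A)) := [set g : F | X g /\ ~ Pn g /\ forall u, List.In u L -> g u = f u].
have FB : Filter (filter_from [set: seq (node A)] B).
  apply: filter_fromT_filter; first by exists [::].
  move=> L1 L2; exists (L1 ++ L2) => g [Xg [nPg hg]]; split.
    by split => //; split => // u uL; apply: hg; apply: List.in_or_app; left.
  by split => //; split => // u uL; apply: hg; apply: List.in_or_app; right.
have cv : (fun g : F => g) @ filter_from [set: seq (node A)] B --> f.
  apply: ptws_cvg => t U /nbhs_singleton Uft.
  exists [:: t] => // g [_ [_ hg]]; rewrite /= hg //; by left.
have := cv _ nP; move=> [L _ BL].
have [g [Xg [nPg hg]]] := bad L.
exact: nPg (BL g (conj Xg (conj nPg hg))).
Qed.


Lemma W_elt : exists w : W, True.
Proof.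
case: hW => _ [nc _]; apply: contra_notP nc => nw.
by apply: csub (countable0 W) => x _; apply: nw; exists x.
Qed.

Lemma enode_prop : set0 `<=` A /\ countable (@set0 W) /\ ord_closed (@set0 W).
Proof.
split => //; split => // a _; exists None, None; split => //; by move=> x _.
Qed.
Definition enode : node A := exist _ set0 enode_prop.

Lemma down_X (s : node A) : X (charf (down s)).
Proof. by exists (down s) => //; exact: down_path. Qed.
Lemma down_s (s : node A) : charf (down s) s.
Proof. apply/charfE; exact: tle_refl. Qed.
Lemma X_down (f : F) (s t : node A) : X f -> f t -> tree_le s t -> f s.
Proof. by move=> /XE [h _] ft st; apply: h st. Qed.

Lemma prod_open (s t : node A) : open [set z : F * F | z.1 s /\ z.2 t].
Proof.
rewrite openE => z [zs zt].
exists ([set g : F | g s = z.1 s], [set g : F | g t = z.2 t]).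
  by split; apply: nbhs_coord.
by move=> [g h] [/= gs ht]; rewrite /= gs ht.
Qed.

Lemma no_dense (S : nat -> set (F * F)) :
  (forall n, S n `<=` X `*` X) ->
  (forall n u, exists v, ext u v /\ forall f g, X f -> X g -> f v.1 -> g v.2 -> ~ S n (f, g)) ->
  ~ (X `*` X `<=` closure (\bigcup_n S n)).
Proof.
move=> Ssub Sd cl.
pose D n (u : node A * node A) := forall f g, X f -> X g -> f u.1 -> g u.2 -> ~ S n (f, g).
have Dup : forall n u v, ext u v -> D n u -> D n v.
  move=> n u v [h1 h2] Du f g Xf Xg fv gv; apply: Du => //.
    exact: X_down Xf fv h1.
  exact: X_down Xg gv h2.
have [v [_ Dv]] := fusion hW hS Dup Sd (enode, enode).
pose z := (charf (down v.1), charf (down v.2)).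
have Xz : (X `*` X) z by split; apply: down_X.
have nz : nbhs z [set z : F * F | z.1 v.1 /\ z.2 v.2].
  apply: open_nbhs_nbhs; split; first exact: prod_open.
  by split; apply: down_s.
have [w [[n _ Snw] [w1 w2]]] := cl _ Xz _ nz.
have [Xw1 Xw2] := Ssub _ _ Snw.
by apply: (Dv n w.1 w.2 Xw1 Xw2 w1 w2); rewrite -surjective_pairing.
Qed.

Lemma not_nwd : ~ nwd_separable (X `*` X).
Proof.
move=> [N [hN [Dsub Dden]]]; apply: (no_dense (fun n => (hN n).1)) Dden.
move=> n [s t].
have [w0 _] := W_elt.
pose z0 := (charf (down s), charf (down t)).
pose O := [set z : F * F | z.1 s /\ z.2 t].
have : ~ (O `&` (X `*` X) `<=` closure (N n)).
  move=> h; have := (hN n).2 _ (@prod_open s t) h.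
  move=> /seteqP[/(_ z0) h0 _]; apply: h0; split.
    by split; apply: down_s.
  by split; apply: down_X.
move=> /existsNP[z /not_implyP[[Oz Xz] nclz]].
move: nclz => /existsNP[B /not_implyP[nB nint]].
case: nB => -[P Q] [/= nP nQ] PQB.
have [s' [ss' [_ hs']]] := basic w0 Xz.1 Oz.1 nP.
have [t' [tt' [_ ht']]] := basic w0 Xz.2 Oz.2 nQ.
exists (s', t'); split; first by split.
move=> f g Xf Xg fs' gt' Sfg; apply: nint; exists (f, g); split => //.
apply: PQB; split; [exact: hs'|exact: ht'].
Qed.

Lemma two_ext (s1 : node A) (x1 : F) : X x1 -> exists s2, tree_le s1 s2 /\ ~ x1 s2.
Proof.
move=> Xx1.
have [b hb] := node_bound hW s1.
have [a1 [Aa1 ba1]] := A_unbounded hW hS b.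
have [a2 [Aa2 a12]] := A_unbounded hW hS a1.
have h1 : forall x, sv s1 x -> x < a1 by move=> x /hb xb; exact: lt_trans xb ba1.
have h2 : forall x, sv s1 x -> x < a2 by move=> x /h1 xa; exact: lt_trans xa a12.
have [n1|y1] := pselect (x1 (addpt Aa1 h1)).
  have [n2|y2] := pselect (x1 (addpt Aa2 h2)); last first.
    by exists (addpt Aa2 h2); split => //; exact: addpt_le.
  exfalso; have /XE [_ hl] := Xx1.
  case: (hl _ _ n1 n2) => [[sub _]|[sub _]].
    case: (sub a1 (or_intror erefl)) => [/h1|]; first by rewrite ltxx.
    by move=> e; move: a12; rewrite e ltxx.
  case: (sub a2 (or_intror erefl)) => [/h1 a21|e].
    by move: (lt_trans a12 a21); rewrite ltxx.
  by move: a12; rewrite e ltxx.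
by exists (addpt Aa1 h1); split => //; exact: addpt_le.
Qed.

Lemma not_dsep : ~ d_separable (X `*` X).
Proof.
move=> [Dn [hD [Dsub Dden]]]; apply: (no_dense (fun n => (hD n).1)) Dden.
move=> n [s t].
have [w0 _] := W_elt.
have [int|nint] := pselect ((Dn n) `&` [set z : F * F | z.1 s /\ z.2 t] !=set0); last first.
  exists (s, t); split; first exact: ext_refl.
  move=> f g Xf Xg fs gt Sfg; apply: nint; by exists (f, g).
case: int => x [Dx [xs xt]].
have [V [oV [Vx VD]]] := (hD n).2 x Dx.
have [Xx1 Xx2] := (hD n).1 x Dx.
have nV : nbhs x V by apply: open_nbhs_nbhs.
case: nV => -[P Q] [/= nP nQ] PQV.
have [s1 [ss1 [_ hs1]]] := basic w0 Xx1 xs nP.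
have [t1 [tt1 [_ ht1]]] := basic w0 Xx2 xt nQ.
have [s2 [s12 ns2]] := two_ext s1 Xx1.
exists (s2, t1); split; first by split => //; exact: tle_trans ss1 s12.
move=> f g Xf Xg fs2 gt1 Dfg.
have Vfg : V (f, g).
  apply: PQV; split => /=; [apply: (hs1 f Xf); exact: X_down Xf fs2 s12|exact: (ht1 g Xg gt1)].
have : (V `&` Dn n) (f, g) by split.
rewrite VD => /= e; apply: ns2; by rewrite -e.
Qed.

End Top.

Theorem theorem2p7 (d : Order.disp_t) (W : orderType d) (A : set W) :
  is_omega1 W -> stationary A -> co_stationary A ->
  corson_compact (paths_space A) /\
  ~ nwd_separable (paths_space A `*` paths_space A) /\
  ~ d_separable (paths_space A `*` paths_space A).
Proof.
move=> hW hS hC; split; first exact: corson.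
split; [exact: not_nwd|exact: not_dsep].
Qed.
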